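(* Let $\mathcal{G}$ be a finite collection of nonempty subsets of $\{1,\dots,d\}$, let $n=\sum_{g\in\mathcal{G}}|g|$, and let $\mathbb{R}^n$ be partitioned into pairwise disjoint index blocks $j(g)$, $|j(g)|=|g|$, $g\in\mathcal{G}$, with $\mathbf{x}_{j(g)}$ identified with a vector supported on the coordinates in $g$. Let $M\in\{0,1\}^{d\times n}$ satisfy $(M\mathbf{x})_i=\sum_{g\in\mathcal{G}:\,i\in g}(\text{entry of }\mathbf{x}_{j(g)}\text{ corresponding to }i)$. Let $\lambda>0$, $w_g>0$, $\mathbf{b}\in\mathbb{R}^d$, $\rho>0$, and $$L_\rho(\mathbf{x}^1,\mathbf{x}^2;\mathbf{y})=\lambda\sum_{g\in\mathcal{G}}w_g\|\mathbf{x}^1_{j(g)}\|_2+\tfrac12\|M\mathbf{x}^2-\mathbf{b}\|_2^2+\langle\mathbf{y},\mathbf{x}^1-\mathbf{x}^2\rangle+\tfrac{\rho}{2}\|\mathbf{x}^1-\mathbf{x}^2\|_2^2 .$$ Assume $L_\rho$ has a finite saddle point. Let $\alpha$ satisfy $0<\alpha<\rho$, and consider the sequences generated from initial points $\mathbf{x}^{1,0},\mathbf{x}^{2,0},\mathbf{y}^0\in\mathbb{R}^n$ by $$\mathbf{x}^{1,k+1}_{j(g)}=\arg\min_{\mathbf{z}\in\mathbb{R}^{|g|}}\lambda w_g\|\mathbf{z}\|_2+\tfrac{\rho}{2}\big\|\mathbf{z}-\mathbf{x}^{2,k}_{j(g)}+\tfrac1\rho\mathbf{y}^k_{j(g)}\big\|_2^2\quad(g\in\mathcal{G}),$$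 $$\mathbf{x}^{2,k+1}=\arg\min_{\mathbf{x}^2\in\mathbb{R}^n}\tfrac12\|M\mathbf{x}^2-\mathbf{b}\|_2^2+\tfrac{\rho}{2}\big\|\mathbf{x}^2-\mathbf{x}^{1,k+1}-\tfrac1\rho\mathbf{y}^k\big\|_2^2,$$ $$\mathbf{y}^{k+1}=\mathbf{y}^k+\alpha(\mathbf{x}^{1,k+1}-\mathbf{x}^{2,k+1}).$$ Then the sequences $\{\mathbf{x}^{1,k}\}$, $\{\mathbf{x}^{2,k}\}$ and $\{\mathbf{y}^k\}$ are uniformly bounded.
   Context: A saddle point of $L_\rho$ is $(\mathbf{x}^{1,*},\mathbf{x}^{2,*};\mathbf{y}^* )$ with $L_\rho(\mathbf{x}^{1,*},\mathbf{x}^{2,*};\mathbf{y})\le L_\rho(\mathbf{x}^{1,*},\mathbf{x}^{2,*};\mathbf{y}^* )\le L_\rho(\mathbf{x}^1,\mathbf{x}^2;\mathbf{y}^* )$ for all $\mathbf{x}^1,\mathbf{x}^2,\mathbf{y}$. The iteration is ADMM with dual stepsize $\alpha$ applied to $\min\lambda\sum_g w_g\|\mathbf{x}^1_{j(g)}\|_2+\frac12\|M\mathbf{x}^2-\mathbf{b}\|_2^2$ s.t. $\mathbf{x}^1=\mathbf{x}^2$ (the proximal operator of the latent overlapping group lasso penalty at $\mathbf{b}$). *)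

(* Defs.v *)
From HB Require Import structures.
From mathcomp Require Import all_boot all_order all_algebra.
From mathcomp Require Import reals.
Set Implicit Arguments. Unset Strict Implicit. Unset Printing Implicit Defensive.
Import Order.TTheory GRing.Theory Num.Theory.
Local Open Scope ring_scope.

(* Each coordinate k of R^n belongs to the block
   j(blk k) of the group blk k, and corresponds to the coordinate crd k \in blk k
   of R^d.  The map k |-> (blk k, crd k) is a bijection from 'I_n onto
   {(g,i) | g \in G, i \in g}; this is the partition of R^n into blocks j(g)
   with |j(g)| = |g| and the identification of x_{j(g)} with a vector
   supported on g. *)
Definition block_structure (d n : nat) (G : {set {set 'I_d}})
    (blk : 'I_n -> {set 'I_d}) (crd : 'I_n -> 'I_d) : Prop :=
  [/\ forall k, blk k \in G,
      forall k, crd k \in blk k,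
      forall k l, blk k = blk l -> crd k = crd l -> k = l
    & forall g i, g \in G -> i \in g -> exists k, blk k = g /\ crd k = i].

Section Defs.
Variable R : realType.
Variables (d n : nat).

Definition vnorm (x : 'I_n -> R) : R := Num.sqrt (\sum_(k < n) x k ^+ 2).

Definition blknorm (blk : 'I_n -> {set 'I_d}) (g : {set 'I_d}) (x : 'I_n -> R) : R :=
  Num.sqrt (\sum_(k < n | blk k == g) x k ^+ 2).

(* (M x)_i = sum over the groups g containing i of the entry of x_{j(g)}
   corresponding to i *)
Definition Mop (crd : 'I_n -> 'I_d) (x : 'I_n -> R) : 'I_d -> R :=
  fun i => \sum_(k < n | crd k == i) x k.

Definition lsq (crd : 'I_n -> 'I_d) (b : 'I_d -> R) (x : 'I_n -> R) : R :=
  2^-1 * \sum_(i < d) (Mop crd x i - b i) ^+ 2.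

Definition Lrho (G : {set {set 'I_d}}) (blk : 'I_n -> {set 'I_d})
    (crd : 'I_n -> 'I_d) (lam : R) (w : {set 'I_d} -> R) (b : 'I_d -> R)
    (rho : R) (x1 x2 y : 'I_n -> R) : R :=
  lam * (\sum_(g in G) w g * blknorm blk g x1)
  + lsq crd b x2
  + \sum_(k < n) y k * (x1 k - x2 k)
  + rho / 2 * \sum_(k < n) (x1 k - x2 k) ^+ 2.

Definition has_saddle_point (L : ('I_n -> R) -> ('I_n -> R) -> ('I_n -> R) -> R) : Prop :=
  exists x1s x2s ys : 'I_n -> R,
    forall x1 x2 y : 'I_n -> R,
      L x1s x2s y <= L x1s x2s ys /\ L x1s x2s ys <= L x1 x2 ys.

(* objective of the x^1-subproblem on block g:
   lam w_g ||z||_2 + rho/2 || z - x2_{j(g)} + (1/rho) y_{j(g)} ||^2,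
   z ranging over the block j(g) (entries of z outside j(g) are irrelevant) *)
Definition x1obj (blk : 'I_n -> {set 'I_d}) (lam : R) (w : {set 'I_d} -> R)
    (rho : R) (g : {set 'I_d}) (x2 y z : 'I_n -> R) : R :=
  lam * w g * blknorm blk g z
  + rho / 2 * \sum_(k < n | blk k == g) (z k - x2 k + rho^-1 * y k) ^+ 2.

Definition x2obj (crd : 'I_n -> 'I_d) (b : 'I_d -> R) (rho : R)
    (x1 y z : 'I_n -> R) : R :=
  lsq crd b z + rho / 2 * \sum_(k < n) (z k - x1 k - rho^-1 * y k) ^+ 2.

End Defs.

(* Main.v *)
Require Import Defs.
From HB Require Import structures.
From mathcomp Require Import all_boot all_order all_algebra.
From mathcomp Require Import reals.
From mathcomp Require Import ring lra.
Import Order.TTheory GRing.Theory Num.Theory.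
Local Open Scope ring_scope.

Lemma lim0 (R : realFieldType) (c E : R) : 0 <= E ->
  (forall t, 0 < t -> t <= 1 -> - (t * E) <= c) -> 0 <= c.
Proof.
move=> E0 H; rewrite leNgt; apply/negP => c0.
have Ec : 0 < E - c by lra.
set t := - c / (E - c).
have t0 : 0 < t by apply: divr_gt0; lra.
have t1 : t <= 1 by rewrite /t ler_pdivrMr //; lra.
have te : t * (E - c) = - c by rewrite /t; field; lra.
have := H _ t0 t1.
have : t * c < 0 by rewrite pmulr_rlt0.
nra.
Qed.

Lemma vi_abs (R : realFieldType) (n : nat) (phi : ('I_n -> R) -> R) (x : 'I_n -> R)
  (K q : R) (p e : 'I_n -> R) :
  0 <= q ->
  (forall v t, 0 < t -> t <= 1 ->
     phi (fun k => x k + t * (v k - x k)) <= phi x + t * (phi v - phi x)) ->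
  (forall v, phi x + (K + \sum_k (p k * x k + q * (x k + e k) ^+ 2))
     <= phi v + (K + \sum_k (p k * v k + q * (v k + e k) ^+ 2))) ->
  forall v, 0 <= phi v - phi x + \sum_k (p k + 2 * q * (x k + e k)) * (v k - x k).
Proof.
move=> q0 cvx hmin v.
apply: (@lim0 _ _ (\sum_k q * (v k - x k) ^+ 2)).
  by apply: sumr_ge0 => k _; apply: mulr_ge0 => //; apply: sqr_ge0.
move=> t t0 t1.
have := hmin (fun k => x k + t * (v k - x k)).
have := cvx v t t0 t1.
have -> : \sum_k (p k * (x k + t * (v k - x k)) + q * (x k + t * (v k - x k) + e k) ^+ 2)
  = \sum_k (p k * x k + q * (x k + e k) ^+ 2)
    + t * \sum_k (p k + 2 * q * (x k + e k)) * (v k - x k)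
    + t * (t * \sum_k q * (v k - x k) ^+ 2).
  rewrite !mulr_sumr -!big_split /=; apply: eq_bigr => k _; ring.
set A := \sum_k (p k + 2 * q * (x k + e k)) * (v k - x k).
set D := \sum_k q * (v k - x k) ^+ 2.
move=> h1 h2.
have : 0 <= t * (phi v - phi x + A + t * D) by lra.
rewrite pmulr_rge0 //; lra.
Qed.

Lemma cs (R : rcfType) n (P : pred 'I_n) (a b : 'I_n -> R) :
  \sum_(k < n | P k) a k * b k <=
  Num.sqrt (\sum_(k < n | P k) a k ^+ 2) * Num.sqrt (\sum_(k < n | P k) b k ^+ 2).
Proof.
set A := \sum_(k < n | P k) a k ^+ 2.
set B := \sum_(k < n | P k) b k ^+ 2.
set S := \sum_(k < n | P k) a k * b k.
have A0 : 0 <= A by apply: sumr_ge0 => k _; apply: sqr_ge0.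
have B0 : 0 <= B by apply: sumr_ge0 => k _; apply: sqr_ge0.
set sA := Num.sqrt A; set sB := Num.sqrt B.
have hA : sA ^+ 2 = A by rewrite sqr_sqrtr.
have hB : sB ^+ 2 = B by rewrite sqr_sqrtr.
have sA0 : 0 <= sA by apply: sqrtr_ge0.
have sB0 : 0 <= sB by apply: sqrtr_ge0.
have key : \sum_(k < n | P k) (sB * a k - sA * b k) ^+ 2
   = sB ^+ 2 * A + (- (2 * (sA * sB))) * S + sA ^+ 2 * B.
  rewrite /A /B /S !mulr_sumr -!big_split /=; apply: eq_bigr => k _; ring.
have k0 : 0 <= \sum_(k < n | P k) (sB * a k - sA * b k) ^+ 2.
  by apply: sumr_ge0 => k _; apply: sqr_ge0.
rewrite key hA hB in k0.
have [p0|] := ltrP 0 (sA * sB).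
  have : 0 <= (sA * sB) * (sA * sB - S).
    rewrite -hA -hB in k0. lra.
  rewrite pmulr_rge0 //; lra.
have p0 : 0 <= sA * sB by apply: mulr_ge0.
move=> p1; have /eqP : sA * sB = 0 by apply/eqP; rewrite eq_le p1 p0.
rewrite mulf_eq0 => /orP [] /eqP h0.
  have AA : A = 0 by rewrite -hA h0 expr0n.
  have := psumr_eq0P (fun k _ => sqr_ge0 (a k)) AA => ha.
  rewrite /S big1 ?h0 ?mul0r // => k Pk.
  by have /eqP := ha k Pk; rewrite sqrf_eq0 => /eqP ->; rewrite mul0r.
have BB : B = 0 by rewrite -hB h0 expr0n.
have := psumr_eq0P (fun k _ => sqr_ge0 (b k)) BB => hb.
rewrite /S big1 ?h0 ?mulr0 // => k Pk.
by have /eqP := hb k Pk; rewrite sqrf_eq0 => /eqP ->; rewrite mulr0.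
Qed.

Lemma minkowski (R : rcfType) n (P : pred 'I_n) (a b : 'I_n -> R) :
  Num.sqrt (\sum_(k < n | P k) (a k + b k) ^+ 2) <=
  Num.sqrt (\sum_(k < n | P k) a k ^+ 2) + Num.sqrt (\sum_(k < n | P k) b k ^+ 2).
Proof.
have := cs _ _ P a b.
set A := \sum_(k < n | P k) a k ^+ 2.
set B := \sum_(k < n | P k) b k ^+ 2.
set S := \sum_(k < n | P k) a k * b k.
have A0 : 0 <= A by apply: sumr_ge0 => k _; apply: sqr_ge0.
have B0 : 0 <= B by apply: sumr_ge0 => k _; apply: sqr_ge0.
have hA : Num.sqrt A ^+ 2 = A by rewrite sqr_sqrtr.
have hB : Num.sqrt B ^+ 2 = B by rewrite sqr_sqrtr.
have sA0 : 0 <= Num.sqrt A by apply: sqrtr_ge0.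
have sB0 : 0 <= Num.sqrt B by apply: sqrtr_ge0.
move=> hS.
have e : \sum_(k < n | P k) (a k + b k) ^+ 2 = A + 2 * S + B.
  rewrite /A /B /S mulr_sumr -!big_split /=; apply: eq_bigr => k _; ring.
rewrite e -[X in _ <= X]ger0_norm ?addr_ge0 // -sqrtr_sqr ler_sqrt ?sqr_ge0 //.
rewrite sqrrD hA hB; lra.
Qed.

Lemma sqrt_scale (R : rcfType) n (P : pred 'I_n) (c : R) (a : 'I_n -> R) :
  Num.sqrt (\sum_(k < n | P k) (c * a k) ^+ 2) = `|c| * Num.sqrt (\sum_(k < n | P k) a k ^+ 2).
Proof.
have -> : \sum_(k < n | P k) (c * a k) ^+ 2 = c ^+ 2 * \sum_(k < n | P k) a k ^+ 2.
  by rewrite mulr_sumr; apply: eq_bigr => k _; rewrite exprMn.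
by rewrite sqrtrM ?sqr_ge0 // sqrtr_sqr.
Qed.

Lemma sqrt_convex (R : rcfType) n (P : pred 'I_n) (x v : 'I_n -> R) (t : R) :
  0 <= t -> t <= 1 ->
  Num.sqrt (\sum_(k < n | P k) (x k + t * (v k - x k)) ^+ 2) <=
  Num.sqrt (\sum_(k < n | P k) x k ^+ 2) +
    t * (Num.sqrt (\sum_(k < n | P k) v k ^+ 2) - Num.sqrt (\sum_(k < n | P k) x k ^+ 2)).
Proof.
move=> t0 t1.
have -> : \sum_(k < n | P k) (x k + t * (v k - x k)) ^+ 2 =
          \sum_(k < n | P k) ((1 - t) * x k + t * v k) ^+ 2.
  by apply: eq_bigr => k _; congr (_ ^+ 2); ring.
apply: le_trans (minkowski _ _ _ _ _) _.
rewrite !sqrt_scale (ger0_norm t0) ger0_norm; last by lra.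
lra.
Qed.

Definition fobj (R : realType) d n (G : {set {set 'I_d}}) (blk : 'I_n -> {set 'I_d})
  (lam : R) (w : {set 'I_d} -> R) (x : 'I_n -> R) : R :=
  lam * (\sum_(g in G) w g * blknorm blk g x).
Arguments fobj {R d n}.

Lemma fobj_cvx (R : realType) d n (G : {set {set 'I_d}}) (blk : 'I_n -> {set 'I_d})
  (lam : R) (w : {set 'I_d} -> R) :
  0 <= lam -> (forall g, g \in G -> 0 < w g) ->
  forall x v t, 0 < t -> t <= 1 ->
  fobj G blk lam w (fun k => x k + t * (v k - x k)) <=
  fobj G blk lam w x + t * (fobj G blk lam w v - fobj G blk lam w x).
Proof.
move=> l0 w0 x v t t0 t1; rewrite /fobj.
set A := \sum_(g in G) w g * blknorm blk g x.
set B := \sum_(g in G) w g * blknorm blk g v.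
suff : \sum_(g in G) w g * blknorm blk g (fun k => x k + t * (v k - x k)) <= A + t * (B - A).
  move=> h; have := ler_wpM2l l0 h; lra.
have -> : A + t * (B - A) = \sum_(g in G) (w g * blknorm blk g x
     + t * (w g * blknorm blk g v - w g * blknorm blk g x)).
  by rewrite big_split /= -mulr_sumr sumrB.
apply: ler_sum => g gG.
have -> : w g * blknorm blk g x + t * (w g * blknorm blk g v - w g * blknorm blk g x)
   = w g * (blknorm blk g x + t * (blknorm blk g v - blknorm blk g x)) by ring.
apply: ler_wpM2l; first exact: ltW (w0 g gG).
rewrite /blknorm; apply: sqrt_convex; lra.
Qed.

Lemma lsq_cvx (R : realType) d n (crd : 'I_n -> 'I_d) (b : 'I_d -> R) :
  forall x v t, 0 < t -> t <= 1 ->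
  lsq crd b (fun k => x k + t * (v k - x k)) <=
  lsq crd b x + t * (lsq crd b v - lsq crd b x).
Proof.
move=> x v t t0 t1; rewrite /lsq.
have hM : forall i, Mop crd (fun k => x k + t * (v k - x k)) i
    = Mop crd x i + t * (Mop crd v i - Mop crd x i).
  by move=> i; rewrite /Mop big_split /= -mulr_sumr sumrB.
set A := \sum_(i < d) (Mop crd x i - b i) ^+ 2.
set B := \sum_(i < d) (Mop crd v i - b i) ^+ 2.
suff : \sum_(i < d) (Mop crd (fun k => x k + t * (v k - x k)) i - b i) ^+ 2 <= A + t * (B - A).
  move=> h; have := ler_wpM2l (_ : 0 <= 2^-1 :> R) h; rewrite invr_ge0 ler0n => /(_ isT); lra.
have -> : A + t * (B - A) = \sum_(i < d) ((Mop crd x i - b i) ^+ 2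
     + t * ((Mop crd v i - b i) ^+ 2 - (Mop crd x i - b i) ^+ 2)).
  by rewrite big_split /= -mulr_sumr sumrB.
apply: ler_sum => i _; rewrite hM.
set p := Mop crd x i; set q := Mop crd v i.
have -> : (p + t * (q - p) - b i) ^+ 2 = (p - b i) ^+ 2 + t * ((q - b i) ^+ 2 - (p - b i) ^+ 2)
   - t * (1 - t) * (q - p) ^+ 2 by ring.
have : 0 <= t * (1 - t) * (q - p) ^+ 2.
  by apply: mulr_ge0; [apply: mulr_ge0; lra | apply: sqr_ge0].
lra.
Qed.

Lemma sum_blocks (R : realType) d n (G : {set {set 'I_d}}) (blk : 'I_n -> {set 'I_d})
  (F : 'I_n -> R) : (forall k, blk k \in G) ->
  \sum_(g in G) \sum_(k < n | blk k == g) F k = \sum_(k < n) F k.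
Proof.
move=> hG; rewrite (partition_big blk (fun g => g \in G)) //=.
Qed.

Lemma x1_ident (R : realType) d n (G : {set {set 'I_d}}) (blk : 'I_n -> {set 'I_d})
  (lam : R) (w : {set 'I_d} -> R) (rho : R) (x2 y z : 'I_n -> R) :
  (forall k, blk k \in G) ->
  \sum_(g in G) x1obj blk lam w rho g x2 y z = fobj G blk lam w z +
   (0 + \sum_(k < n) (0 * z k + rho / 2 * (z k + (- x2 k + rho^-1 * y k)) ^+ 2)).
Proof.
move=> hG; rewrite /x1obj big_split /= /fobj mulr_sumr; congr (_ + _).
  by apply: eq_bigr => g _; rewrite mulrA.
rewrite -mulr_sumr sum_blocks // add0r mulr_sumr; apply: eq_bigr => k _; ring.
Qed.

Lemma x2_ident (R : realType) d n (crd : 'I_n -> 'I_d) (b : 'I_d -> R) (rho : R)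
  (x1 y z : 'I_n -> R) :
  x2obj crd b rho x1 y z = lsq crd b z +
   (0 + \sum_(k < n) (0 * z k + rho / 2 * (z k + (- x1 k - rho^-1 * y k)) ^+ 2)).
Proof.
rewrite /x2obj add0r mulr_sumr; congr (_ + _); apply: eq_bigr => k _; ring.
Qed.

Lemma LA_ident (R : realType) d n (G : {set {set 'I_d}}) (blk : 'I_n -> {set 'I_d})
  (crd : 'I_n -> 'I_d) (lam : R) (w : {set 'I_d} -> R) (b : 'I_d -> R) (rho : R)
  (v x2s ys : 'I_n -> R) :
  Lrho G blk crd lam w b rho v x2s ys = fobj G blk lam w v +
   ((lsq crd b x2s - \sum_(k < n) ys k * x2s k) +
    \sum_(k < n) (ys k * v k + rho / 2 * (v k + - x2s k) ^+ 2)).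
Proof.
rewrite /Lrho -/(fobj G blk lam w v) -[in LHS]addrA.
have -> : \sum_(k < n) ys k * (v k - x2s k) + rho / 2 * \sum_(k < n) (v k - x2s k) ^+ 2
  = - \sum_(k < n) ys k * x2s k + \sum_(k < n) (ys k * v k + rho / 2 * (v k + - x2s k) ^+ 2).
  rewrite mulr_sumr -sumrN -!big_split /=; apply: eq_bigr => k _; ring.
ring.
Qed.

Lemma LB_ident (R : realType) d n (G : {set {set 'I_d}}) (blk : 'I_n -> {set 'I_d})
  (crd : 'I_n -> 'I_d) (lam : R) (w : {set 'I_d} -> R) (b : 'I_d -> R) (rho : R)
  (v x1s ys : 'I_n -> R) :
  Lrho G blk crd lam w b rho x1s v ys = lsq crd b v +
   ((fobj G blk lam w x1s + \sum_(k < n) ys k * x1s k) +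
    \sum_(k < n) (- ys k * v k + rho / 2 * (v k + - x1s k) ^+ 2)).
Proof.
rewrite /Lrho -/(fobj G blk lam w x1s) -[in LHS]addrA.
have -> : \sum_(k < n) ys k * (x1s k - v k) + rho / 2 * \sum_(k < n) (x1s k - v k) ^+ 2
  = \sum_(k < n) ys k * x1s k + \sum_(k < n) (- ys k * v k + rho / 2 * (v k + - x1s k) ^+ 2).
  rewrite mulr_sumr -!big_split /=; apply: eq_bigr => k _; ring.
ring.
Qed.
Theorem lemma3p2 (R : realType) (d n : nat) (G : {set {set 'I_d}})
    (blk : 'I_n -> {set 'I_d}) (crd : 'I_n -> 'I_d)
    (lam : R) (w : {set 'I_d} -> R) (b : 'I_d -> R) (rho alpha : R)
    (x1 x2 y : nat -> 'I_n -> R) :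
  set0 \notin G ->
  block_structure G blk crd ->
  0 < lam ->
  (forall g, g \in G -> 0 < w g) ->
  0 < rho ->
  has_saddle_point (Lrho G blk crd lam w b rho) ->
  0 < alpha -> alpha < rho ->
  (forall k g, g \in G -> forall z : 'I_n -> R,
      x1obj blk lam w rho g (x2 k) (y k) (x1 k.+1)
        <= x1obj blk lam w rho g (x2 k) (y k) z) ->
  (forall k (z : 'I_n -> R),
      x2obj crd b rho (x1 k.+1) (y k) (x2 k.+1)
        <= x2obj crd b rho (x1 k.+1) (y k) z) ->
  (forall k i, y k.+1 i = y k i + alpha * (x1 k.+1 i - x2 k.+1 i)) ->
  exists C : R, forall k,
    [/\ vnorm (x1 k) <= C, vnorm (x2 k) <= C & vnorm (y k) <= C].
Proof.
move=> G0 [hbG hcrd hinj hsurj] lam0 w0 rho0 [x1s [x2s [ys hsad]]] a0 arho hx1 hx2 hy.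
move: a0 arho hy; move: alpha => a a0 arho hy.
have rho_neq0 : rho != 0 by rewrite gt_eqF.
have hu : forall i, x1s i = x2s i.
  have := (hsad x1s x2s (fun k => ys k + (x1s k - x2s k))).1.
  rewrite /Lrho => h.
  have h' : \sum_(k < n) (ys k + (x1s k - x2s k)) * (x1s k - x2s k)
         - \sum_(k < n) ys k * (x1s k - x2s k) <= 0 by lra.
  rewrite -sumrB in h'.
  have h0 : \sum_(k < n) (x1s k - x2s k) ^+ 2 = 0.
    apply/eqP; rewrite eq_le; apply/andP; split; last first.
      by apply: sumr_ge0 => k _; apply: sqr_ge0.
    by apply: le_trans h'; rewrite le_eqVlt; apply/orP; left; apply/eqP;
       apply: eq_bigr => k _; ring.
  have hh := psumr_eq0P (fun k _ => sqr_ge0 (x1s k - x2s k)) h0.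
  move=> i; have := hh i.
  by move=> /(_ isT) /eqP; rewrite sqrf_eq0 subr_eq0 => /eqP.
have hA : forall v, 0 <= fobj G blk lam w v - fobj G blk lam w x1s +
    \sum_(k < n) (ys k + 2 * (rho / 2) * (x1s k + - x2s k)) * (v k - x1s k).
  apply: (vi_abs _ _ (fobj G blk lam w) x1s (lsq crd b x2s - \sum_(k < n) ys k * x2s k)
          (rho / 2) ys (fun k => - x2s k)).
  - by apply: divr_ge0; [apply: ltW | ].
  - exact: (fobj_cvx _ _ _ G blk lam w (ltW lam0) w0 x1s).
  - by move=> v; have := (hsad v x2s ys).2; rewrite !LA_ident.
have hB : forall v, 0 <= lsq crd b v - lsq crd b x2s +
    \sum_(k < n) (- ys k + 2 * (rho / 2) * (x2s k + - x1s k)) * (v k - x2s k).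
  apply: (vi_abs _ _ (lsq crd b) x2s (fobj G blk lam w x1s + \sum_(k < n) ys k * x1s k)
          (rho / 2) (fun k => - ys k) (fun k => - x1s k)).
  - by apply: divr_ge0; [apply: ltW | ].
  - exact: (lsq_cvx _ _ _ crd b x2s).
  - by move=> v; have := (hsad x1s v ys).2; rewrite !LB_ident.
have h1 : forall k v, 0 <= fobj G blk lam w v - fobj G blk lam w (x1 k.+1) +
    \sum_(i < n) (0 + 2 * (rho / 2) * (x1 k.+1 i + (- x2 k i + rho^-1 * y k i))) * (v i - x1 k.+1 i).
  move=> k.
  apply: (vi_abs _ _ (fobj G blk lam w) (x1 k.+1) 0 (rho / 2) (fun _ => 0)
          (fun i => - x2 k i + rho^-1 * y k i)).
  - by apply: divr_ge0; [apply: ltW | ].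
  - exact: (fobj_cvx _ _ _ G blk lam w (ltW lam0) w0 (x1 k.+1)).
  - move=> v; rewrite -!(x1_ident _ _ _ G blk lam w rho (x2 k) (y k)) //.
    by apply: ler_sum => g gG; apply: hx1.
have h2 : forall k v, 0 <= lsq crd b v - lsq crd b (x2 k.+1) +
    \sum_(i < n) (0 + 2 * (rho / 2) * (x2 k.+1 i + (- x1 k.+1 i - rho^-1 * y k i))) * (v i - x2 k.+1 i).
  move=> k.
  apply: (vi_abs _ _ (lsq crd b) (x2 k.+1) 0 (rho / 2) (fun _ => 0)
          (fun i => - x1 k.+1 i - rho^-1 * y k i)).
  - by apply: divr_ge0; [apply: ltW | ].
  - exact: (lsq_cvx _ _ _ crd b (x2 k.+1)).
  - by move=> v; rewrite -!x2_ident; apply: hx2.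
have comb : forall fu fx hu' hz hzp S1 S2 S3 S4 S5 S6 : R,
   0 <= fu - fx + S1 -> 0 <= hu' - hzp + S2 -> 0 <= hz - hzp + S3 ->
   0 <= hzp - hz + S4 -> 0 <= fx - fu + S5 -> 0 <= hzp - hu' + S6 ->
   0 <= S1 + S2 + S3 + S4 + S5 + S6.
  move=> *; lra.
pose W j := \sum_(i < n) ((y j i - ys i) ^+ 2 + a * rho * (x2 j i - x2s i) ^+ 2
              + a * (rho - a) * (x1 j i - x2 j i) ^+ 2).
have Wdec : forall k, W k.+2 <= W k.+1.
  move=> k.
  have hs := comb _ _ _ _ _ _ _ _ _ _ _ (h1 k.+1 x1s) (h2 k.+1 x2s) (h2 k.+1 (x2 k.+1))
     (h2 k (x2 k.+2)) (hA (x1 k.+2)) (hB (x2 k.+2)).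
  rewrite -!big_split /= in hs.
  set SE := \sum_(i < n) _ in hs.
  have key : W k.+1 - W k.+2 - 2 * a * SE = \sum_(i < n) a * (rho * (x1 k.+2 i - x2 k.+2 i) ^+ 2
     + a * (x2 k.+2 i - x2 k.+1 i) ^+ 2
     + (rho - a) * ((x1 k.+1 i - x2 k.+1 i) + (x2 k.+2 i - x2 k.+1 i)) ^+ 2).
    rewrite /W /SE mulr_sumr -!sumrB; apply: eq_bigr => i _ /=.
    rewrite !hu !hy; field; exact: rho_neq0.
  have : 0 <= \sum_(i < n) a * (rho * (x1 k.+2 i - x2 k.+2 i) ^+ 2
     + a * (x2 k.+2 i - x2 k.+1 i) ^+ 2
     + (rho - a) * ((x1 k.+1 i - x2 k.+1 i) + (x2 k.+2 i - x2 k.+1 i)) ^+ 2).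
    apply: sumr_ge0 => ii _; apply: mulr_ge0; first exact: ltW.
    apply: addr_ge0; first apply: addr_ge0; apply: mulr_ge0; try apply: sqr_ge0; lra.
  have : 0 <= 2 * a * SE by apply: mulr_ge0 => //; apply: mulr_ge0 => //; apply: ltW.
  lra.
have ar0 : 0 < a * rho by apply: mulr_gt0.
have ara0 : 0 < a * (rho - a) by apply: mulr_gt0 => //; lra.
have W0 : forall j, 0 <= W j.
  move=> j; apply: sumr_ge0 => i _.
  have := sqr_ge0 (y j i - ys i).
  have := mulr_ge0 (ltW ar0) (sqr_ge0 (x2 j i - x2s i)).
  have := mulr_ge0 (ltW ara0) (sqr_ge0 (x1 j i - x2 j i)).
  lra.
have Wle : forall k, W k.+1 <= W 1.
  by elim=> [|k IH] //; exact: le_trans (Wdec k) IH.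
pose T j := \sum_(i < n) (x1 j i ^+ 2 + x2 j i ^+ 2 + y j i ^+ 2).
pose K1 := 2 + 5 / (a * rho) + 3 / (a * (rho - a)).
pose Cst := \sum_(i < n) (2 * ys i ^+ 2 + 5 * x2s i ^+ 2).
have c1 : 0 <= 5 / (a * rho) + 3 / (a * (rho - a)).
  by apply: addr_ge0; apply: divr_ge0 => //; apply: ltW.
have c2 : 0 <= 2 * (a * rho) + 3 * rho / (rho - a).
  apply: addr_ge0; first by apply: mulr_ge0 => //; apply: ltW.
  apply: divr_ge0; last lra.
  by apply: mulr_ge0 => //; apply: ltW.
have c3 : 0 <= 2 * (a * (rho - a)) + 5 * (rho - a) / rho.
  apply: addr_ge0; first by apply: mulr_ge0 => //; apply: ltW.
  apply: divr_ge0; last exact: ltW.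
  apply: mulr_ge0 => //; lra.
have K10 : 0 <= K1 by rewrite /K1; lra.
have Tb : forall j, T j <= K1 * W j + Cst.
  move=> j; rewrite /T /W /Cst mulr_sumr -big_split /=; apply: ler_sum => i _.
  set A := (y j i - ys i) ^+ 2; set B := (x2 j i - x2s i) ^+ 2.
  set Cc := (x1 j i - x2 j i) ^+ 2.
  have hxyz : x1 j i ^+ 2 + x2 j i ^+ 2 + y j i ^+ 2 <=
       2 * A + 5 * B + 3 * Cc + (2 * ys i ^+ 2 + 5 * x2s i ^+ 2).
    have -> : 2 * A + 5 * B + 3 * Cc + (2 * ys i ^+ 2 + 5 * x2s i ^+ 2) =
      x1 j i ^+ 2 + x2 j i ^+ 2 + y j i ^+ 2 +
      ((y j i - 2 * ys i) ^+ 2 + (x2 j i - 2 * x2s i) ^+ 2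
       + ((x1 j i - x2 j i) - (x2 j i - x2s i)) ^+ 2
       + ((x2 j i - x2s i) - x2s i) ^+ 2 + ((x1 j i - x2 j i) - x2s i) ^+ 2).
      by rewrite /A /B /Cc; ring.
    rewrite lerDl.
    by rewrite !addr_ge0 ?sqr_ge0.
  have hK : K1 * (A + a * rho * B + a * (rho - a) * Cc) =
     2 * A + 5 * B + 3 * Cc + ((5 / (a * rho) + 3 / (a * (rho - a))) * A
        + (2 * (a * rho) + 3 * rho / (rho - a)) * B
        + (2 * (a * (rho - a)) + 5 * (rho - a) / rho) * Cc).
    rewrite /K1; field; by rewrite rho_neq0 (gt_eqF a0) subr_eq0 (gt_eqF arho).
  have : 0 <= (5 / (a * rho) + 3 / (a * (rho - a))) * A
        + (2 * (a * rho) + 3 * rho / (rho - a)) * B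
        + (2 * (a * (rho - a)) + 5 * (rho - a) / rho) * Cc.
    by rewrite !addr_ge0 // mulr_ge0 // sqr_ge0.
  lra.
pose Bnd := K1 * (W 0%N + W 1%N) + Cst.
have Tk : forall k, T k <= Bnd.
  have := mulr_ge0 K10 (W0 0%N); have := mulr_ge0 K10 (W0 1%N).
  move=> p1 p0; case=> [|j]; first by have := Tb 0%N; rewrite /Bnd; lra.
  have := Tb j.+1; have := ler_wpM2l K10 (Wle j); rewrite /Bnd; lra.
have T0 : forall k, 0 <= T k.
  by move=> k; apply: sumr_ge0 => i _; rewrite !addr_ge0 ?sqr_ge0.
have Bn0 : 0 <= Bnd by apply: le_trans (T0 0%N) (Tk 0%N).
exists (Num.sqrt Bnd) => k.
have hsq : forall i, [/\ x1 k i ^+ 2 <= x1 k i ^+ 2 + x2 k i ^+ 2 + y k i ^+ 2,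
    x2 k i ^+ 2 <= x1 k i ^+ 2 + x2 k i ^+ 2 + y k i ^+ 2 &
    y k i ^+ 2 <= x1 k i ^+ 2 + x2 k i ^+ 2 + y k i ^+ 2].
  move=> i; have := sqr_ge0 (x1 k i); have := sqr_ge0 (x2 k i); have := sqr_ge0 (y k i).
  move=> *; split; lra.
split; rewrite /vnorm ler_sqrt //; apply: le_trans (Tk k); apply: ler_sum => i _;
  by case: (hsq i).
Qed.
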